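(* Let $P$ be a probability distribution on a set $\mathcal{X}$ and let $f,g:\mathcal{X}\to\mathbb{R}^d$ be square-integrable functions with respect to $P$. Then $$\mathbb{E}_{x,x'\sim P\ \text{i.i.d.}}\big[\|f(x)-g(x')\|_2^2\big]\ge\frac12\,\mathbb{E}_{x\sim P}\big[\|f(x)-g(x)\|_2^2\big].$$ *)

(* Defs.v *)
From HB Require Import structures.
From mathcomp Require Import all_boot all_order all_algebra.
From mathcomp Require Import all_classical all_reals all_analysis.
Set Implicit Arguments. Unset Strict Implicit. Unset Printing Implicit Defensive.
Import Order.TTheory GRing.Theory Num.Theory.
Import numFieldNormedType.Exports.
Local Open Scope classical_set_scope.
Local Open Scope ring_scope.

Definition sqnorm2 {R : realType} {d : nat} (u : 'rV[R]_d) : R :=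
  \sum_(i < d) (u ord0 i) ^+ 2.

Definition sq_integrable {dX : measure_display} {X : measurableType dX}
  {R : realType} {d : nat} (P : set X -> \bar R) (f : X -> 'rV[R]_d) : Prop :=
  (forall i : 'I_d, measurable_fun setT (fun x => f x ord0 i)) /\
  P.-integrable setT (fun x => (sqnorm2 (f x))%:E).

(* Main.v *)
Require Import Defs.
From HB Require Import structures.
From mathcomp Require Import all_boot all_order all_algebra.
From mathcomp Require Import all_classical all_reals all_analysis.
From mathcomp Require Import measurable_realfun lebesgue_integral_fubini.
From mathcomp Require Import lra ring.
Import Order.TTheory GRing.Theory Num.Theory.
Local Open Scope classical_set_scope.
Local Open Scope ring_scope.

Section S.
Context (dX : measure_display) (X : measurableType dX) (R : realType)
  (P : probability X R).

Definition Ie (h : X -> R) := P.-integrable setT (EFin \o h).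
Definition Ex (h : X -> R) : R := fine (\int[P]_x (h x)%:E).

Lemma intE h : Ie h -> (\int[P]_x (h x)%:E = (Ex h)%:E)%E.
Proof. by move=> ih; rewrite /Ex fineK //; exact: integrable_fin_num ih. Qed.

Lemma Icst c : Ie (fun=> c).
Proof. exact: finite_measure_integrable_cst. Qed.

Lemma ID h1 h2 : Ie h1 -> Ie h2 -> Ie (fun x => h1 x + h2 x).
Proof.
move=> i1 i2; have := integrableD measurableT i1 i2.
by apply: eq_integrable => // x _ /=; rewrite EFinD.
Qed.

Lemma IZ c h : Ie h -> Ie (fun x => c * h x).
Proof.
move=> i; have := integrableZl measurableT c i.
by apply: eq_integrable => // x _ /=; rewrite EFinM.
Qed.

Lemma ED h1 h2 : Ie h1 -> Ie h2 -> Ex (fun x => h1 x + h2 x) = Ex h1 + Ex h2.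
Proof.
move=> i1 i2; apply: EFin_inj; rewrite -intE; last exact: ID.
under eq_integral do rewrite EFinD.
by rewrite integralD // !intE.
Qed.

Lemma EZ c h : Ie h -> Ex (fun x => c * h x) = c * Ex h.
Proof.
move=> i; apply: EFin_inj; rewrite -intE; last exact: IZ.
under eq_integral do rewrite EFinM.
by rewrite integralZl // intE.
Qed.

Lemma Ecst c : Ex (fun=> c) = c.
Proof.
apply: EFin_inj; rewrite -intE; last exact: Icst.
rewrite integral_cst // [X in (_ * X)%E](_ : _ = 1%E) ?mule1 //; exact: probability_setT.
Qed.

Lemma Ege0 h : (forall x, 0 <= h x) -> 0 <= Ex h.
Proof. by move=> h0; apply: fine_ge0; apply: integral_ge0 => x _; rewrite lee_fin. Qed.


Ltac ii := repeat first [apply: ID | apply: IZ | apply: Icst | assumption].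

Lemma IL2 (u : X -> R) : measurable_fun setT u -> Ie (fun x => u x ^+ 2) -> Ie u.
Proof.
move=> mu i2; apply: (le_integrable measurableT (g := EFin \o (fun x => 1 + u x ^+ 2))).
- exact/measurable_EFinP.
- move=> x _.
  have H : `|u x| <= `|1 + u x ^+ 2|.
    have h : 0 <= 1 + u x ^+ 2 by rewrite addr_ge0 // sqr_ge0.
    rewrite (ger0_norm h); case: (real_ge0P (num_real (u x))) => hx.
      nra.
    nra.
  by cbn; exact: H.
- by apply: ID => //; exact: Icst.
Qed.

Lemma IM (u v : X -> R) : measurable_fun setT u -> measurable_fun setT v ->
  Ie (fun x => u x ^+ 2) -> Ie (fun x => v x ^+ 2) -> Ie (fun x => u x * v x).
Proof.
move=> mu mv i1 i2.
apply: (le_integrable measurableT (g := EFin \o (fun x => u x ^+ 2 + v x ^+ 2))).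
- by apply/measurable_EFinP; exact: measurable_funM.
- move=> x _.
  have H : `|u x * v x| <= `|u x ^+ 2 + v x ^+ 2|.
    have h : 0 <= u x ^+ 2 + v x ^+ 2 by rewrite addr_ge0 // sqr_ge0.
    rewrite (ger0_norm h) normrM.
    case: (real_ge0P (num_real (u x))) => hx; case: (real_ge0P (num_real (v x))) => hy.
    + nra.
    + nra.
    + nra.
    + nra.
  by cbn; exact: H.
- exact: ID.
Qed.


Lemma coord (u v : X -> R) : measurable_fun setT u -> measurable_fun setT v ->
  Ie (fun x => u x ^+ 2) -> Ie (fun x => v x ^+ 2) ->
  (2^-1%:E * \int[P]_x ((u x - v x) ^+ 2)%:E <=
   \int[(P \x P)%E]_z ((u z.1 - v z.2) ^+ 2)%:E)%E.
Proof.
move=> mu mv iu2 iv2.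
have iu : Ie u by exact: IL2.
have iv : Ie v by exact: IL2.
have iuv : Ie (fun x => u x * v x) by exact: IM.
rewrite fubini_tonelli1 /=; last 2 first.
- apply/measurable_EFinP; apply: measurable_funX; apply: measurable_funB.
  + exact: measurableT_comp mu measurable_fst.
  + exact: measurableT_comp mv measurable_snd.
- by move=> z; rewrite lee_fin sqr_ge0.
have inner : forall a, (\int[P]_y ((a - v y) ^+ 2)%:E =
    (a ^+ 2 + ((-2 * a) * Ex v + Ex (fun y => v y ^+ 2)))%:E)%E.
  move=> a.
  rewrite (eq_integral (fun y => (a ^+ 2 + ((-2 * a) * v y + v y ^+ 2))%:E)); last first.
    by move=> y _; congr EFin; ring.
  rewrite intE; last by ii.
  by rewrite ED ?Ecst; [rewrite ED ?EZ|..]; ii.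
rewrite /fubini_F /=.
rewrite (eq_integral (fun x => (u x ^+ 2 + ((-2) * (u x * v x) + v x ^+ 2))%:E)); last first.
  by move=> x _; congr EFin; ring.
rewrite intE; last by ii.
rewrite ED ?Ecst; [rewrite ED ?EZ|..]; ii.
rewrite [X in (_ <= X)%E](eq_integral (fun x => (u x ^+ 2 + ((-2 * Ex v) * u x + Ex (fun y => v y ^+ 2)))%:E)); last first.
  by move=> x _; rewrite (inner (u x)); congr EFin; ring.
rewrite intE; last by ii.
rewrite ED ?Ecst; [rewrite ED ?EZ|..]; ii.
set c := Ex u + Ex v.
have J : 0 <= Ex (fun x => u x ^+ 2 + (2 * (u x * v x) + (v x ^+ 2 +
     ((-2 * c) * u x + ((-2 * c) * v x + c ^+ 2))))).
  rewrite (_ : (fun x => _) = (fun x => (u x + v x - c) ^+ 2)).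
    by apply: Ege0 => x; exact: sqr_ge0.
  by apply: funext => x; ring.
move: J; rewrite ED; last 2 first. by ii. by ii.
rewrite ED; last 2 first. by ii. by ii.
rewrite ED; last 2 first. by ii. by ii.
rewrite ED; last 2 first. by ii. by ii.
rewrite ED; last 2 first. by ii. by ii.
rewrite !EZ; try by ii.
rewrite !Ecst => J.
rewrite -EFinM lee_fin /c in J *.
have := sqr_ge0 (Ex u - Ex v).
nra.
Qed.

End S.

Theorem lemma4 (dX : measure_display) (X : measurableType dX) (R : realType)
  (d : nat) (P : probability X R) (f g : X -> 'rV[R]_d) :
  sq_integrable P f -> sq_integrable P g ->
  (\int[(P \x P)%E]_(z in setT) (sqnorm2 (f z.1 - g z.2))%:E
   >= 2^-1%:E * \int[P]_(x in setT) (sqnorm2 (f x - g x))%:E)%E.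
Proof.
move=> [mf if2] [mg ig2].
have sq (h : X -> 'rV[R]_d) (i : 'I_d) : (forall i, measurable_fun setT (fun x => h x ord0 i)) ->
    P.-integrable setT (fun x => (sqnorm2 (h x))%:E) ->
    @Ie _ _ _ P (fun x => h x ord0 i ^+ 2).
  move=> mh ih; apply: (le_integrable measurableT _ _ ih).
    by apply/measurable_EFinP; apply: measurable_funX.
  move=> x _.
  have H : `|h x ord0 i ^+ 2| <= `|sqnorm2 (h x)|.
    rewrite !ger0_norm ?sqr_ge0 //; last by rewrite /sqnorm2 sumr_ge0 // => j _; rewrite sqr_ge0.
    rewrite /sqnorm2 (bigD1 i) //= lerDl sumr_ge0 // => j _; exact: sqr_ge0.
  by cbn; exact: H.
rewrite (eq_integral (fun z => \sum_(i < d) ((f z.1 ord0 i - g z.2 ord0 i) ^+ 2)%:E)); last first.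
  by move=> z _; rewrite /sqnorm2 sumEFin; congr EFin; apply: eq_bigr => i _; rewrite !mxE.
rewrite [X in (_ * X)%E](eq_integral (fun x => \sum_(i < d) ((f x ord0 i - g x ord0 i) ^+ 2)%:E)); last first.
  by move=> z _; rewrite /sqnorm2 sumEFin; congr EFin; apply: eq_bigr => i _; rewrite !mxE.
rewrite [X in (_ <= X)%E]ge0_integral_sum //; last 2 first.
- move=> k; apply/measurable_EFinP; apply: measurable_funX; apply: measurable_funB.
  + exact: (measurableT_comp (f := fun x => f x ord0 k) (mf k) measurable_fst).
  + exact: (measurableT_comp (f := fun x => g x ord0 k) (mg k) measurable_snd).
- by move=> k z _; rewrite lee_fin sqr_ge0.
rewrite [X in (_ * X)%E]ge0_integral_sum //; last 2 first.
- move=> k; apply/measurable_EFinP; apply: measurable_funX; apply: measurable_funB.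
  + exact: mf.
  + exact: mg.
- by move=> k z _; rewrite lee_fin sqr_ge0.
rewrite ge0_sume_distrr; last first.
  by move=> i _; apply: integral_ge0 => x _; rewrite lee_fin sqr_ge0.
apply: lee_sum => i _.
apply: coord; [exact: mf | exact: mg | exact: sq | exact: sq].
Qed.
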